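(* Let $c,d\in\mathbb{N}$, $I=\mathbb{N}^d\times[c]$, $I_n=[n]^d\times[c]$. Let $\mathfrak{M}=(M_n)_{n\ge1}$ be a $\mathrm{Sym}$-invariant chain of monoids with $M_n\subseteq\mathbb{Z}_{\ge0}^{(I_n)}$ for all $n$, and let $M=\bigcup_{n\ge1}M_n$. Then the following are equivalent: (i) $\mathfrak{M}$ stabilizes (i.e. there is $p\in\mathbb{N}$ with $M_n=\mathbb{Z}_{\ge0}\mathrm{Sym}(n)(M_m)$ for all $n\ge m\ge p$) and $M_n$ is finitely generated for all sufficiently large $n$; (ii) there exist $p\in\mathbb{N}$ and a finite equivariant Hilbert basis $\mathcal{H}_p$ of $M_p$ that is also an equivariant Hilbert basis of $M_n$ for all $n\ge p$; (iii) there exist $q,q'\in\mathbb{N}$ such that for all $n\ge q$: (a) $M_n=M\cap\mathbb{Z}^{(I_n)}$, and (b) $M_n$ has a finite Hilbert basis consisting of elements of support size at most $q'$; (iv) $M$ has a finite equivariant Hilbert basis.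
   Context: $\mathbb{N}=\{1,2,\dots\}$. $\mathbb{Z}^{(I)}$ is the free abelian group with basis $I$, $\mathbb{Z}_{\ge0}^{(I)}$ its nonnegative vectors; $\mathbb{Z}^{(I_n)}\subseteq\mathbb{Z}^{(I)}$ by extension by zero. Support size = number of nonzero entries. For a set $A$, $\mathbb{Z}_{\ge0}A$ is the set of finite $\mathbb{Z}_{\ge0}$-linear combinations of elements of $A$. A Hilbert basis of a monoid $M$ is a minimal generating set (with respect to $\mathbb{Z}_{\ge0}$-combinations). $\mathrm{Sym}(n)$ is the symmetric group on $[n]$, embedded in $\mathrm{Sym}(n+1)$ as stabilizer of $n+1$; $\mathrm{Sym}=\bigcup_n\mathrm{Sym}(n)$ acts on $\mathbb{Z}^{(I)}$ by linear extension of $\sigma(\mathbf{e}_{(i_1,\dots,i_d),j})=\mathbf{e}_{(\sigma(i_1),\dots,\sigma(i_d)),j}$, restricting to $\mathrm{Sym}(n)$ on $\mathbb{Z}^{(I_n)}$; $G(A)=\{\sigma(\mathbf{u})\mid\sigma\in G,\mathbf{u}\in A\}$. A $\mathrm{Sym}$-invariant chain of monoids is $(M_n)_{n\ge1}$ with $M_n\subseteq\mathbb{Z}^{(I_n)}$ a monoid, $M_m\subseteq M_n$ for $m\le n$, each $M_n$ $\mathrm{Sym}(n)$-invariant. $\mathcal{H}\subseteq M_n$ (resp. $\subseteq M$) is an equivariant Hilbert basis if $\mathrm{Sym}(n)(\mathcal{H})$ (resp. $\mathrm{Sym}(\mathcal{H})$) is a Hilbert basis. *)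

(* Defs.v *)
From Stdlib Require List.
From mathcomp Require Import all_boot all_order all_fingroup all_algebra.
Set Implicit Arguments. Unset Strict Implicit. Unset Printing Implicit Defensive.
Import GRing.Theory Num.Theory.
Local Open Scope ring_scope.

(* Index set I = N^d x [c]; coordinates of the N^d part are positive naturals
   (N = {1,2,...}); the [c] part is represented by 'I_c. *)
Definition idx (c d : nat) := (d.-tuple nat * 'I_c)%type.

(* Vectors of Z^(I), as integer-valued functions on I (finite support is
   always guaranteed by the hypotheses where needed). *)
Definition vec (c d : nat) := idx c d -> int.

Definition vset (c d : nat) := vec c d -> Prop.

Definition vzero {c d} : vec c d := fun _ => 0.
Definition vadd {c d} (u v : vec c d) : vec c d := fun x => u x + v x.

Definition in_In {c d} (n : nat) (x : idx c d) : bool :=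
  all (fun k => (0 < k) && (k <= n))%N x.1.

(* u lies in Z^(I_n) (extension by zero) *)
Definition supp_in {c d} (n : nat) (u : vec c d) : Prop :=
  forall x, u x != 0 -> in_In n x.

Definition nonneg {c d} (u : vec c d) : Prop := forall x, 0 <= u x.

Definition supp_size_le {c d} (u : vec c d) (k : nat) : Prop :=
  exists s : seq (idx c d),
    [/\ uniq s, (forall x, (u x != 0) <-> (x \in s)) & (size s <= k)%N].

Definition subset {c d} (A B : vset c d) : Prop := forall u, A u -> B u.
Definition seteq {c d} (A B : vset c d) : Prop := forall u, A u <-> B u.

Definition is_monoid {c d} (A : vset c d) : Prop :=
  A vzero /\ (forall u v, A u -> A v -> A (vadd u v)).

Definition finite_set {c d} (A : vset c d) : Prop :=
  exists s : seq (vec c d), forall u, A u <-> List.In u s.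

Definition nncomb {c d} (A : vset c d) : vset c d := fun u =>
  exists s : seq (nat * vec c d),
    (forall p, List.In p s -> A p.2) /\
    (forall x, u x = \sum_(p <- s) ((p.1)%:Z * p.2 x)).

Definition hilbert_basis {c d} (M H : vset c d) : Prop :=
  [/\ subset H M, seteq (nncomb H) M &
      forall H', subset H' H -> subset M (nncomb H') -> subset H H'].

(* A permutation of [n] = {1..n}, viewed as a map on N fixing all k > n
   (and 0). The element i of [n] corresponds to the ordinal i-1 of 'I_n. *)
Definition perm_nat (n : nat) (s : {perm 'I_n}) (k : nat) : nat :=
  if k is k'.+1 then
    match (@insub nat (fun j => j < n)%N _ k') with
    | Some i => (s i).+1
    | None => k
    end
  else 0.

(* action of sigma in Sym(n): sigma(e_{(i1..id),j}) = e_{(sigma i1,..,sigma id),j},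
   i.e. (sigma u)(i,j) = u(sigma^-1 i, j) *)
Definition act {c d} (n : nat) (s : {perm 'I_n}) (u : vec c d) : vec c d :=
  fun x => u (map_tuple (perm_nat s^-1) x.1, x.2).

Definition orbitn {c d} (n : nat) (A : vset c d) : vset c d := fun u =>
  exists (s : {perm 'I_n}) (v : vec c d), A v /\ u = act s v.

Definition orbit {c d} (A : vset c d) : vset c d := fun u =>
  exists n, (1 <= n)%N /\ orbitn n A u.

Definition sym_invariant {c d} (n : nat) (A : vset c d) : Prop :=
  forall (s : {perm 'I_n}) u, A u -> A (act s u).

Definition sym_chain {c d} (M : nat -> vset c d) : Prop :=
  [/\ forall n, (1 <= n)%N -> is_monoid (M n),
      forall n u, (1 <= n)%N -> M n u -> supp_in n u /\ nonneg u,
      forall m n, (1 <= m <= n)%N -> subset (M m) (M n) &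
      forall n, (1 <= n)%N -> sym_invariant n (M n)].

Definition chain_union {c d} (M : nat -> vset c d) : vset c d := fun u =>
  exists n, (1 <= n)%N /\ M n u.

Definition stabilizes {c d} (M : nat -> vset c d) : Prop :=
  exists p, (1 <= p)%N /\
    forall m n, (p <= m <= n)%N -> seteq (M n) (nncomb (orbitn n (M m))).

Definition fin_generated {c d} (A : vset c d) : Prop :=
  exists H, finite_set H /\ subset H A /\ seteq (nncomb H) A.

Definition eq_hilbert_basis_n {c d} (n : nat) (A H : vset c d) : Prop :=
  subset H A /\ hilbert_basis A (orbitn n H).

Definition eq_hilbert_basis {c d} (A H : vset c d) : Prop :=
  subset H A /\ hilbert_basis A (orbit H).

(* Main.v *)
Require Import Defs.
From mathcomp Require Import all_boot all_order all_fingroup all_algebra zify.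
From Stdlib Require Import Classical ClassicalEpsilon FunctionalExtensionality.
Require Import Defs.
Set Implicit Arguments. Unset Strict Implicit. Unset Printing Implicit Defensive.
Import GRing.Theory Num.Theory.
Local Open Scope ring_scope.

Definition pb (P : Prop) : bool := if excluded_middle_informative P then true else false.
Lemma pbP (P : Prop) : reflect P (pb P).
Proof. rewrite /pb; case: excluded_middle_informative => h; constructor; done. Qed.

Lemma PN_in n (s : {perm 'I_n}) (i : 'I_n) : perm_nat s (nat_of_ord i).+1 = (nat_of_ord (s i)).+1.
Proof.
rewrite /perm_nat (insubT (fun j => (j < n)%N) (ltn_ord i)) /=.
by have -> : (Sub (val i) (ltn_ord i) : 'I_n) = i by apply/val_inj.
Qed.

Lemma PN_out n (s : {perm 'I_n}) k : (n < k)%N -> perm_nat s k = k.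
Proof.
case: k => // k hk; rewrite /perm_nat insubF //; apply/negbTE; rewrite -leqNgt; lia.
Qed.

Lemma PN_K n (s : {perm 'I_n}) k : perm_nat s (perm_nat s^-1 k) = k.
Proof.
case: k => // k; case: (ltnP k n) => hk.
  have := PN_in s^-1 (Ordinal hk) => /= ->.
  by rewrite PN_in permKV.
by rewrite !PN_out.
Qed.

Lemma PN_Kv n (s : {perm 'I_n}) k : perm_nat s^-1 (perm_nat s k) = k.
Proof. by have := PN_K s^-1 k; rewrite invgK. Qed.

Lemma PN_inj n (s : {perm 'I_n}) : injective (perm_nat s).
Proof. exact: can_inj (@PN_Kv n s). Qed.

Lemma PN_range n (s : {perm 'I_n}) k : (0 < k <= n)%N -> (0 < perm_nat s k <= n)%N.
Proof.
case: k => // k /= hk; have hk' : (k < n)%N by lia.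
have := PN_in s (Ordinal hk') => /= ->; have := ltn_ord (s (Ordinal hk')); lia.
Qed.

Lemma PN_0 n (s : {perm 'I_n}) : perm_nat s 0 = 0%N.
Proof. by []. Qed.

Section Act.
Context {c d : nat}.

Lemma tuple_map_K n (s : {perm 'I_n}) (t : d.-tuple nat) :
  map_tuple (perm_nat s) (map_tuple (perm_nat s^-1) t) = t.
Proof. apply/val_inj => /=; rewrite -map_comp; apply: map_id_in => k _ /=; exact: PN_K. Qed.

Lemma tuple_map_Kv n (s : {perm 'I_n}) (t : d.-tuple nat) :
  map_tuple (perm_nat s^-1) (map_tuple (perm_nat s) t) = t.
Proof. apply/val_inj => /=; rewrite -map_comp; apply: map_id_in => k _ /=; exact: PN_Kv. Qed.

Lemma act_K n (s : {perm 'I_n}) (u : vec c d) : act s (act s^-1 u) = u.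
Proof.
apply: functional_extensionality => x; rewrite /act /= invgK tuple_map_K.
by case: x.
Qed.

Lemma act_Kv n (s : {perm 'I_n}) (u : vec c d) : act s^-1 (act s u) = u.
Proof. by have := act_K s^-1 u; rewrite invgK. Qed.

Lemma act_vzero n (s : {perm 'I_n}) : act s (@vzero c d) = vzero.
Proof. by []. Qed.

Lemma act_vadd n (s : {perm 'I_n}) (u v : vec c d) : act s (vadd u v) = vadd (act s u) (act s v).
Proof. by []. Qed.

Lemma act_nonneg n (s : {perm 'I_n}) (u : vec c d) : nonneg u -> nonneg (act s u).
Proof. by move=> h x; apply: h. Qed.

End Act.

Lemma ext_perm m (U : nat -> Prop) (f : nat -> nat) :
  (forall k, U k -> (0 < k <= m)%N) -> (forall k, U k -> (0 < f k <= m)%N) ->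
  (forall k l, U k -> U l -> f k = f l -> k = l) ->
  exists t : {perm 'I_m}, forall k, U k -> perm_nat t k = f k.
Proof.
move=> hU hf hinj.
case: m hU hf => [|m] hU hf.
  by exists 1%g => k /hU; lia.
pose A : {set 'I_m.+1} := [set i | pb (U (nat_of_ord i).+1)].
pose g0 (i : 'I_m.+1) : 'I_m.+1 := inord (f (nat_of_ord i).+1).-1.
have g0K : forall i, i \in A -> nat_of_ord (g0 i) = (f (nat_of_ord i).+1).-1.
  move=> i; rewrite inE => /pbP /hf h; rewrite /g0 /= inordK //; lia.
have g0inj : {in A &, injective g0}.
  move=> i j hi hj e; have := g0K _ hi; have := g0K _ hj; rewrite e => -> .
  move: hi hj; rewrite !inE => /pbP hi /pbP hj.
  have := hf _ hi; have := hf _ hj => h1 h2 e2.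
  have e3 : f (nat_of_ord i).+1 = f (nat_of_ord j).+1 by move: e2; rewrite -!subn1; lia.
  have := hinj _ _ hi hj e3 => e4; apply/val_inj => /=; lia.
pose B := g0 @: A.
have cAB : #|B| = #|A| by rewrite card_in_imset.
pose ca := enum (~: A); pose cb := enum (~: B).
have sz : size ca = size cb.
  rewrite /ca /cb -!cardE; have := cardsC A; have := cardsC B; rewrite !card_ord; lia.
pose F (i : 'I_m.+1) := if i \in A then g0 i else nth ord0 cb (index i ca).
have Fout : forall i, i \notin A -> F i \notin B.
  move=> i hi; rewrite /F (negbTE hi).
  have hin : i \in ca by rewrite /ca mem_enum inE.
  have : nth ord0 cb (index i ca) \in cb by apply: mem_nth; rewrite -sz index_mem.
  by rewrite /cb mem_enum inE.
have Finj : injective F.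
  move=> i j; case hi: (i \in A); case hj: (j \in A).
  - by rewrite /F hi hj; apply: g0inj.
  - move=> e; have := Fout j (negbT hj); rewrite -e /F hi.
    by rewrite imset_f.
  - move=> e; have := Fout i (negbT hi); rewrite e /F hj.
    by rewrite imset_f.
  - rewrite /F hi hj => e.
    have hin : i \in ca by rewrite /ca mem_enum inE hi.
    have hjn : j \in ca by rewrite /ca mem_enum inE hj.
    have : index i ca = index j ca.
      have hu : uniq cb by rewrite /cb enum_uniq.
      apply/eqP; rewrite -(nth_uniq ord0 _ _ hu); first by rewrite e.
      by rewrite -sz index_mem. by rewrite -sz index_mem.
    by move=> e2; rewrite -(nth_index ord0 hin) e2 nth_index.
exists (perm Finj) => k hk.
have := hU _ hk; case: k hk => // k hk hr.
have hk' : (k < m.+1)%N by lia.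
have := PN_in (perm Finj) (Ordinal hk') => /= ->.
rewrite permE /F.
have hA : Ordinal hk' \in A by rewrite inE; apply/pbP.
rewrite hA g0K //=; have := hf _ hk; lia.
Qed.

Section Act2.
Context {c d : nat}.

Lemma act_agree_half n N (t : {perm 'I_n}) (s : {perm 'I_N}) (S : nat -> Prop) (v : vec c d) y j :
  (forall k, S k -> perm_nat t k = perm_nat s k) ->
  (forall x, v x != 0 -> forall k, k \in tval x.1 -> S k) ->
  v (map_tuple (perm_nat t^-1) y, j) != 0 ->
  map_tuple (perm_nat t^-1) y = map_tuple (perm_nat s^-1) y.
Proof.
move=> hts hS hv; apply/val_inj => /=; apply/eq_in_map => k hk.
have hS' : S (perm_nat t^-1 k).
  apply: (hS _ hv) => /=; exact: map_f.
have := hts _ hS'; rewrite PN_K => e.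
by rewrite [in RHS]e PN_Kv.
Qed.

Lemma act_agree n N (t : {perm 'I_n}) (s : {perm 'I_N}) (S : nat -> Prop) (v : vec c d) :
  (forall k, S k -> perm_nat t k = perm_nat s k) ->
  (forall x, v x != 0 -> forall k, k \in tval x.1 -> S k) ->
  act t v = act s v.
Proof.
move=> hts hS; apply: functional_extensionality => [[y j]]; rewrite /act /=.
case: (boolP (v (map_tuple (perm_nat t^-1) y, j) != 0)) => h1.
  by rewrite (act_agree_half hts hS h1).
case: (boolP (v (map_tuple (perm_nat s^-1) y, j) != 0)) => h2.
  have hst : forall k, S k -> perm_nat s k = perm_nat t k by move=> k /hts ->.
  by rewrite (act_agree_half hst hS h2).
by move: h1 h2; rewrite !negbK => /eqP -> /eqP ->.
Qed.

Lemma restrict n N (s : {perm 'I_N}) (v : vec c d) :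
  supp_in n v -> supp_in n (act s v) -> exists t : {perm 'I_n}, act t v = act s v.
Proof.
move=> hv hsv.
pose S k := exists x, v x != 0 /\ k \in tval x.1.
have [t ht] : exists t : {perm 'I_n}, forall k, S k -> perm_nat t k = perm_nat s k.
  apply: ext_perm.
  - move=> k [x [hx hk]]; have := hv _ hx; rewrite /in_In => /allP; exact.
  - move=> k [x [hx hk]].
    have hy : act s v (map_tuple (perm_nat s) x.1, x.2) != 0.
      by rewrite /act /= tuple_map_Kv; case: x hx hk.
    have := hsv _ hy; rewrite /in_In /= => /allP; apply; exact: map_f.
  - by move=> k l _ _; apply: PN_inj.
exists t; apply: (act_agree ht) => x hx k hk; by exists x.
Qed.

Lemma embed N K (s : {perm 'I_N}) : (N <= K)%N ->
  exists t : {perm 'I_K}, forall v : vec c d, act t v = act s v.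
Proof.
move=> hNK.
have [t ht] : exists t : {perm 'I_K}, forall k, (0 < k <= K)%N -> perm_nat t k = perm_nat s k.
  apply: ext_perm => //.
  - move=> k hk; case: (leqP k N) => h.
      have : (0 < k <= N)%N by lia.
      move/(PN_range s); lia.
    rewrite PN_out //.
  - by move=> k l _ _; apply: PN_inj.
exists t => v; apply: (act_agree (S := fun _ => True)) => // k _.
case: k => // k; case: (leqP k.+1 K) => h; first by apply: ht.
by rewrite !PN_out //; lia.
Qed.

End Act2.

Section Mon.
Context {c d : nat}.
Implicit Types (A G : vset c d) (u v : vec c d).

Definition irr A u : Prop :=
  [/\ A u, u <> vzero & forall a b, A a -> A b -> u = vadd a b -> a = vzero \/ b = vzero].

Definition good A := is_monoid A /\ forall u, A u -> nonneg u /\ exists n, supp_in n u.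

Definition vsum (s : seq (nat * vec c d)) : vec c d :=
  fun x => \sum_(p <- s) ((p.1)%:Z * p.2 x).

Lemma vsum_cons p s x : vsum (p :: s) x = (p.1)%:Z * p.2 x + vsum s x.
Proof. by rewrite /vsum big_cons. Qed.

Lemma vsum_nil x : vsum [::] x = 0.
Proof. by rewrite /vsum big_nil. Qed.

Lemma mon_scale A k u : is_monoid A -> A u -> A (fun x => k%:Z * u x).
Proof.
move=> [h0 hadd] hu; elim: k => [|k IH].
  have -> : (fun x => 0%N%:Z * u x) = vzero by apply: functional_extensionality => x; rewrite mul0r.
  done.
have -> : (fun x => k.+1%:Z * u x) = vadd u (fun x => k%:Z * u x).
  by apply: functional_extensionality => x; rewrite /vadd; lia.
by apply: hadd.
Qed.

Lemma NC A s : is_monoid A -> (forall p, List.In p s -> A p.2) -> A (vsum s).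
Proof.
move=> hA; elim: s => [|p s IH] hs.
  have -> : vsum [::] = vzero by apply: functional_extensionality => x; rewrite vsum_nil.
  by case: hA.
have -> : vsum (p :: s) = vadd (fun x => (p.1)%:Z * p.2 x) (vsum s).
  by apply: functional_extensionality => x; rewrite vsum_cons.
case: (hA) => _ hadd; apply: hadd.
  by apply: mon_scale => //; apply: hs; left.
by apply: IH => q hq; apply: hs; right.
Qed.

Lemma nncomb_sub A G u : is_monoid A -> Defs.subset G A -> nncomb G u -> A u.
Proof.
move=> hA hGA [s [hs hu]].
have -> : u = vsum s by apply: functional_extensionality => x; rewrite hu.
by apply: NC => // p /hs /hGA.
Qed.

Lemma nncomb_add G u v : nncomb G u -> nncomb G v -> nncomb G (vadd u v).
Proof.
move=> [s [hs hu]] [t [ht hv]]; exists (s ++ t); split.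
  by move=> p /List.in_app_iff [/hs|/ht].
by move=> x; rewrite /vadd hu hv big_cat.
Qed.

Lemma nncomb_mon G G' u : Defs.subset G G' -> nncomb G u -> nncomb G' u.
Proof. by move=> hG [s [hs hu]]; exists s; split => // p /hs /hG. Qed.

Lemma nncomb_filter G' u s : (forall x, u x = vsum s x) ->
  (forall p, List.In p s -> p.1 <> 0%N -> G' p.2) -> nncomb G' u.
Proof.
elim: s u => [|p s IH] u hu hs.
  by exists [::]; split => // x; rewrite hu vsum_nil big_nil.
have [t [ht htu]] : nncomb G' (vsum s).
  by apply: IH => // q hq; apply: hs; right.
case: (eqVneq p.1 0%N) => hp.
  by exists t; split => // x; rewrite hu vsum_cons hp mul0r add0r htu.
exists (p :: t); split.
  by move=> q [<-|/ht]; [apply: hs; [left|apply/eqP]|].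
by move=> x; rewrite hu vsum_cons big_cons htu.
Qed.

Lemma vsum_ge0 s x : (forall p, List.In p s -> nonneg p.2) -> 0 <= vsum s x.
Proof.
elim: s => [|p s IH] hs; first by rewrite vsum_nil.
rewrite vsum_cons; have := IH (fun q hq => hs q (or_intror hq)).
have := hs p (or_introl erefl) x; move: (p.2 x) (vsum s x) => a b; lia.
Qed.

Lemma term_le s p x : (forall q, List.In q s -> nonneg q.2) -> List.In p s -> p.1 <> 0%N ->
  p.2 x <= vsum s x.
Proof.
elim: s => [|q s IH] hs //= hp hp1.
have hs' : forall r, List.In r s -> nonneg r.2 by move=> r hr; apply: hs; right.
rewrite vsum_cons; have := vsum_ge0 x hs'; have := hs q (or_introl erefl) x.
case: hp => [e|hp].
  subst q; move: (p.1) hp1 (p.2 x) (vsum s x) => k hk a b; nia.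
have := IH hs' hp hp1; move: (q.1) (q.2 x) (vsum s x) (p.2 x) => k a b e; nia.
Qed.

Lemma irr_in_gen A G u : is_monoid A -> Defs.subset G A -> Defs.subset A (nncomb G) -> irr A u -> G u.
Proof.
move=> hA hGA hAG [hu hu0 hirr].
have [s [hs hsu]] := hAG _ hu.
elim: s u hu hu0 hirr hs hsu => [|p s IH] u hu hu0 hirr hs hsu.
  by exfalso; apply: hu0; apply: functional_extensionality => x; rewrite hsu big_nil.
have hs' : forall q, List.In q s -> G q.2 by move=> q hq; apply: hs; right.
have hvs : A (vsum s) by apply: NC => // q /hs' /hGA.
case e: p.1 => [|k].
  apply: (IH u hu hu0 hirr hs') => x; rewrite hsu big_cons e mul0r add0r //.
have hp2 : G p.2 by apply: hs; left.
have hrest : A (fun x => k%:Z * p.2 x + vsum s x).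
  case: (hA) => _ hadd; apply: (hadd (fun x => k%:Z * p.2 x) (vsum s)) => //.
  by apply: mon_scale => //; apply: hGA.
have ed : u = vadd p.2 (fun x => k%:Z * p.2 x + vsum s x).
  apply: functional_extensionality => x; rewrite /vadd hsu big_cons e -/(vsum s x); lia.
case: (hirr _ _ (hGA _ hp2) hrest ed) => h.
  apply: (IH u hu hu0 hirr hs') => x; rewrite hsu big_cons h /vzero mulr0 add0r //.
suff -> : u = p.2 by [].
rewrite ed h; apply: functional_extensionality => x; rewrite /vadd /vzero addr0 //.
Qed.

Lemma sum_ge_elem (L : seq (idx c d)) (F : idx c d -> int) x :
  x \in L -> (forall y, 0 <= F y) -> F x <= \sum_(y <- L) F y.
Proof.
move=> hx hF; rewrite (big_rem x hx) /=.
have := @sumr_ge0 _ _ (rem x L) xpredT F (fun y _ => hF y); move: (F x) (\sum_(y <- _) _) => a b; lia.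
Qed.

Lemma L3_aux A (L : seq (idx c d)) : good A -> forall w : nat, forall u, A u ->
  (forall x, u x != 0 -> x \in L) -> \sum_(x <- L) u x < w%:Z -> nncomb (irr A) u.
Proof.
move=> [hA hgood]; elim=> [|w IH] u hu hL hw.
  have := @sumr_ge0 _ _ L xpredT u (fun y _ => (hgood u hu).1 y); move: hw; move: (\sum_(x <- L) u x) => a; lia.
case: (classic (u = vzero)) => hu0.
  by exists [::]; split => // x; rewrite hu0 big_nil.
case: (classic (irr A u)) => hirr.
  exists [:: (1%N, u)]; split; first by move=> p [<-|].
  by move=> x; rewrite big_cons big_nil mul1r addr0.
have [a [b [ha [hb [hab [ha0 hb0]]]]]] :
    exists a b, A a /\ A b /\ u = vadd a b /\ a <> vzero /\ b <> vzero.
  apply: NNPP => hne; apply: hirr; split => // a b ha hb hab.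
  case: (classic (a = vzero)) => ha0; first by left.
  case: (classic (b = vzero)) => hb0; first by right.
  by exfalso; apply: hne; exists a, b.
have hna := (hgood a ha).1; have hnb := (hgood b hb).1.
have nz : forall v, v <> vzero -> exists x, v x != 0.
  move=> v hv; apply: NNPP => hne; apply: hv; apply: functional_extensionality => x.
  by apply/eqP; apply: NNPP => h; apply: hne; exists x; apply/negP.
have hLa : forall x, a x != 0 -> x \in L.
  move=> x hx; apply: hL; rewrite hab /vadd; have := hna x; have := hnb x; move: hx; lia.
have hLb : forall x, b x != 0 -> x \in L.
  move=> x hx; apply: hL; rewrite hab /vadd; have := hna x; have := hnb x; move: hx; lia.
have hsum : \sum_(x <- L) u x = \sum_(x <- L) a x + \sum_(x <- L) b x.
  by rewrite hab /vadd big_split.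
have [xa hxa] := nz a ha0; have [xb hxb] := nz b hb0.
have := sum_ge_elem (hLa _ hxa) hna; have := sum_ge_elem (hLb _ hxb) hnb.
have := hna xa; have := hnb xb; move: hxa hxb.
move=> hxa hxb h1 h2 h3 h4.
rewrite hab; apply: nncomb_add.
  apply: (IH a ha hLa); move: hxa hxb h1 h2 h3 h4 hw; rewrite hsum; lia.
apply: (IH b hb hLb); move: hxa hxb h1 h2 h3 h4 hw; rewrite hsum; lia.
Qed.

End Mon.

Section Mon2.
Context {c d : nat}.
Implicit Types (A G H : vset c d) (u v : vec c d).

Definition cover (n : nat) : seq (idx c d) :=
  [seq (map_tuple (@nat_of_ord n.+1) t, j) | t <- enum [set: d.-tuple 'I_n.+1], j <- enum 'I_c].

Lemma cover_mem n (x : idx c d) : in_In n x -> x \in cover n.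
Proof.
case: x => y j; rewrite /in_In /= => /allP hy.
pose t : d.-tuple 'I_n.+1 := map_tuple (fun k => inord k) y.
have -> : y = map_tuple (@nat_of_ord n.+1) t.
  apply/val_inj => /=; rewrite -map_comp; apply/esym/map_id_in => k hk /=.
  by rewrite inordK //; have := hy _ hk; lia.
by apply: allpairs_f; rewrite mem_enum // inE.
Qed.

Lemma L3 A u : good A -> A u -> nncomb (irr A) u.
Proof.
move=> hg hu; have [hnn [n hn]] := hg.2 u hu.
apply: (@L3_aux _ _ A (cover n) hg (absz (\sum_(x <- cover n) u x)).+1 u hu).
  by move=> x /hn; apply: cover_mem.
have := @sumr_ge0 _ _ (cover n) xpredT u (fun y _ => hnn y); move: (\sum_(x <- _) u x) => a; lia.
Qed.

Lemma hb_irr A H : good A -> hilbert_basis A H -> forall u, H u <-> irr A u.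
Proof.
move=> hg [hHA hgen hmin].
have hAH : Defs.subset A (nncomb H) by move=> u /hgen.
have irrH : forall u, irr A u -> H u by move=> u; apply: irr_in_gen hg.1 hHA hAH.
move=> u; split; last exact: irrH.
have := hmin (irr A) irrH (fun v hv => L3 hg hv); exact.
Qed.

Lemma irr_hb A H : good A -> (forall u, H u <-> irr A u) -> hilbert_basis A H.
Proof.
move=> hg hH.
have hHA : Defs.subset H A by move=> u /hH [].
split => //.
  move=> u; split; first by apply: nncomb_sub hg.1 hHA.
  by move=> hu; apply: nncomb_mon (L3 hg hu) => v /hH.
move=> H' hH'H hAH' u /hH hu; apply: irr_in_gen hg.1 _ hAH' hu.
by move=> v /hH'H /hH [].
Qed.

Lemma in_ListIn (T : eqType) (x : T) s : x \in s -> List.In x s.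
Proof. elim: s => [|y s IH] //=; rewrite in_cons => /orP [/eqP ->|/IH]; [left|right]; done. Qed.

Lemma fin_sub G H : finite_set H -> (forall u, G u -> H u) -> finite_set G.
Proof.
move=> [s hs] hGH; exists (List.filter (fun u => pb (G u)) s) => u.
rewrite List.filter_In; split.
  by move=> hu; split; [apply/hs/hGH | apply/pbP].
by move=> [_ /pbP].
Qed.

Lemma fin_orb n H : finite_set H -> finite_set (orbitn n H).
Proof.
move=> [s hs]; exists (List.flat_map (fun p => List.map (fun h => act p h) s) (enum [set: {perm 'I_n}])) => u.
rewrite List.in_flat_map; split.
  move=> [p [v [/hs hv ->]]]; exists p; split; first by apply: in_ListIn; rewrite mem_enum inE.
  by apply: List.in_map.
move=> [p [_ /List.in_map_iff [v [<- /hs hv]]]]; by exists p, v.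
Qed.

Lemma ss_cover p u : supp_in p u -> supp_size_le u (size (cover p)).
Proof.
move=> hu; exists (undup [seq x <- cover p | u x != 0]); split.
- exact: undup_uniq.
- move=> x; rewrite mem_undup mem_filter; split; first by move=> h; rewrite h cover_mem // hu.
  by case/andP.
- by rewrite (leq_trans (size_undup _)) // size_filter count_size.
Qed.

Lemma ss_act n (s : {perm 'I_n}) u k : supp_size_le u k -> supp_size_le (act s u) k.
Proof.
move=> [l [hl hm hk]].
pose f (x : idx c d) : idx c d := (map_tuple (perm_nat s) x.1, x.2).
pose g (x : idx c d) : idx c d := (map_tuple (perm_nat s^-1) x.1, x.2).
have fg : cancel g f by case=> y j; rewrite /f /g /= tuple_map_K.
have gf : cancel f g by case=> y j; rewrite /f /g /= tuple_map_Kv.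
have finj := can_inj gf.
exists (map f l); split; last by rewrite size_map.
  by rewrite map_inj_uniq.
move=> x; rewrite /act -/(g x) hm; split.
  by move=> h; rewrite -(fg x) mem_map.
by rewrite -{1}(fg x) mem_map.
Qed.

Lemma ss_mono u k k' : (k <= k')%N -> supp_size_le u k -> supp_size_le u k'.
Proof. by move=> hk [l [h1 h2 h3]]; exists l; split => //; apply: leq_trans hk. Qed.

End Mon2.

Section Chain.
Context {c d : nat} (M : nat -> vset c d) (hM : sym_chain M).
Implicit Types (A B G H : vset c d) (u v : vec c d).

Local Notation U := (chain_union M).

Lemma in_In_mono m n (x : idx c d) : (m <= n)%N -> in_In m x -> in_In n x.
Proof. move=> hmn /allP h; apply/allP => k /h; lia. Qed.

Lemma supp_in_mono m n u : (m <= n)%N -> supp_in m u -> supp_in n u.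
Proof. by move=> hmn h x /h; apply: in_In_mono. Qed.

Lemma good_M n : (1 <= n)%N -> good (M n).
Proof.
case: hM => hmon hsupp _ _ hn; split; first exact: hmon.
by move=> u hu; have [h1 h2] := hsupp n u hn hu; split => //; exists n.
Qed.

Lemma good_U : good U.
Proof.
case: hM => hmon hsupp hinc _; split.
  split; first by exists 1%N; split => //; case: (hmon 1%N erefl).
  move=> u v [m [hm hu]] [n [hn hv]]; exists (maxn m n); split; first lia.
  case: (hmon (maxn m n)) => [|_ ]; first lia.
  move=> hadd; apply: hadd; [apply: (hinc m) | apply: (hinc n)] => //; lia.
move=> u [n [hn hu]]; have [h1 h2] := hsupp n u hn hu; split => //; by exists n.
Qed.

Lemma M_U n u : (1 <= n)%N -> M n u -> U u.
Proof. by move=> hn hu; exists n. Qed.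

Lemma U_act N (s : {perm 'I_N}) u : U u -> U (act s u).
Proof.
case: hM => _ _ hinc hsym [m [hm hu]].
have [t ht] := embed (c:=c) (d:=d) s (leq_maxr m N).
exists (maxn m N); split; first lia.
rewrite -ht; apply: hsym; first lia.
by apply: (hinc m) => //; lia.
Qed.

Lemma irr_act_gen A B n (s : {perm 'I_n}) h : irr A h -> B (act s h) ->
  (forall a b, B a -> B b -> act s h = vadd a b -> A (act s^-1 a) /\ A (act s^-1 b)) ->
  irr B (act s h).
Proof.
move=> [hA h0 hirr] hB hab; split => //.
  by move=> e; apply: h0; rewrite -(act_Kv s h) e.
move=> a b ha hb e; have [ha' hb'] := hab a b ha hb e.
have e' : h = vadd (act s^-1 a) (act s^-1 b) by rewrite -act_vadd -e act_Kv.
case: (hirr _ _ ha' hb' e') => e2; [left|right].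
  by rewrite -(act_K s a) e2.
by rewrite -(act_K s b) e2.
Qed.

Lemma irr_sub A B u : (forall v, B v -> A v) -> B u -> irr A u -> irr B u.
Proof. by move=> hBA hB [hA h0 hirr]; split => // a b /hBA ha /hBA hb; apply: hirr. Qed.

Lemma irr_U_act N (s : {perm 'I_N}) h : irr U h -> irr U (act s h).
Proof.
move=> hh; have hU : U h by case: hh.
apply: (irr_act_gen hh); first by apply: U_act.
by move=> a b ha hb _; split; apply: U_act.
Qed.

Lemma SL p : (1 <= p)%N ->
  (forall m n, (p <= m <= n)%N -> seteq (M n) (nncomb (orbitn n (M m)))) ->
  forall m n u, (p <= m <= n)%N -> M n u -> supp_in m u -> M m u.
Proof.
case: hM => hmon hsupp hinc hsym hp1 hst m n u hmn hu hum.
have hm1 : (1 <= m)%N by lia.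
have [s [hs hsu]] := (hst m n hmn u).1 hu.
have hnn : forall q, List.In q s -> nonneg q.2.
  move=> q /hs [σ [v [hv ->]]]; apply: act_nonneg.
  by have [] := hsupp m v hm1 hv.
apply: (nncomb_sub (hmon m hm1) (G := M m)) => //.
apply: (nncomb_filter hsu) => q hq hq1.
have [σ [v [hv e]]] := hs q hq.
have hvs : supp_in m v by have [] := hsupp m v hm1 hv.
have hsv : supp_in m (act σ v).
  move=> x hx; apply: hum; rewrite hsu; rewrite -e in hx.
  have := term_le x hnn hq hq1; have := hnn q hq x; move: hx; change (\sum_(p0 <- s) (p0.1)%:Z * p0.2 x) with (vsum s x); lia.
have [t ht] := restrict hvs hsv.
by rewrite e -ht; apply: hsym.
Qed.

End Chain.

Section Main.
Context {c d : nat} (M : nat -> vset c d) (hM : sym_chain M).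
Local Notation U := (chain_union M).

Definition cond_i := stabilizes M /\ exists N, forall n, (N <= n)%N -> fin_generated (M n).
Definition cond_ii := exists p (Hp : vset c d), (1 <= p)%N /\ finite_set Hp /\
      eq_hilbert_basis_n p (M p) Hp /\
      forall n, (p <= n)%N -> eq_hilbert_basis_n n (M n) Hp.
Definition cond_iii := exists q q', (1 <= q)%N /\ (1 <= q')%N /\
      forall n, (q <= n)%N ->
        (forall u, M n u <-> (chain_union M u /\ supp_in n u)) /\
        exists H, finite_set H /\ hilbert_basis (M n) H /\
                  forall u, H u -> supp_size_le u q'.
Definition cond_iv := exists H, finite_set H /\ eq_hilbert_basis (chain_union M) H.

Lemma ii_stab p Hp : (1 <= p)%N -> eq_hilbert_basis_n p (M p) Hp ->
  (forall n, (p <= n)%N -> eq_hilbert_basis_n n (M n) Hp) ->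
  forall m n, (p <= m <= n)%N -> seteq (M n) (nncomb (orbitn n (M m))).
Proof.
case: hM => hmon hsupp hinc hsym hp1 [hHp _] hall m n hmn u.
have [_ [hsub hgen hmin]] := hall n (ltac:(lia)).
split.
  move=> hu; apply: nncomb_mon ((hgen u).2 hu) => v [σ [h [hh ->]]].
  exists σ, h; split => //; apply: (hinc p) => //; first lia; exact: hHp.
apply: nncomb_sub; first by apply: hmon; lia.
move=> v [σ [h [hh ->]]]; apply: hsym; first lia.
by apply: (hinc m) => //; lia.
Qed.

Lemma ii_to_i : cond_ii -> cond_i.
Proof.
case: (hM) => hmon hsupp hinc hsym [p [Hp [hp1 [hfin [hp hall]]]]].
split; first by exists p; split => //; apply: (ii_stab hp1 hp hall).
exists p => n hn; exists (orbitn n Hp); split; first exact: fin_orb.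
by have [_ [hsub hgen _]] := hall n hn.
Qed.

Lemma i_to_ii : cond_i -> cond_ii.
Proof.
case: (hM) => hmon hsupp hinc hsym [[p [hp1 hst]] [N hN]].
pose r := maxn p N.
have hr1 : (1 <= r)%N by rewrite /r; lia.
have [G [hGf [hGs hGg]]] := hN r (leq_maxr p N).
have hSL := SL hM hp1 hst.
have claim : forall n, (r <= n)%N -> eq_hilbert_basis_n n (M n) (irr (M r)).
  move=> n hn; have hn1 : (1 <= n)%N by lia.
  split; first by move=> u [hu _ _]; apply: (hinc r) => //; lia.
  apply: irr_hb; first exact: good_M.
  move=> w; split.
    move=> [σ [h [hh ->]]]; apply: (irr_act_gen hh).
      by apply: hsym => //; apply: (hinc r) => //; [lia | case: hh].
    move=> a b ha hb e.
    have ea : h = vadd (act σ^-1 a) (act σ^-1 b) by rewrite -act_vadd -e act_Kv.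
    have hMn : forall z, M n z -> M n (act σ^-1 z) by move=> z hz; apply: hsym.
    have hnn : forall z, M n z -> nonneg z by move=> z hz; have [] := hsupp n z hn1 hz.
    have hsh : supp_in r h by case: hh => hh _ _; have [] := hsupp r h hr1 hh.
    split.
      apply: (hSL r n) => //; [lia | exact: hMn |].
      move=> x hx; apply: hsh; rewrite ea /vadd.
      have := hnn _ (hMn _ ha) x; have := hnn _ (hMn _ hb) x; move: hx; lia.
    apply: (hSL r n) => //; [lia | exact: hMn |].
    move=> x hx; apply: hsh; rewrite ea /vadd.
    have := hnn _ (hMn _ ha) x; have := hnn _ (hMn _ hb) x; move: hx; lia.
  move=> hw.
  have hG : orbitn n (M r) w.
    apply: (irr_in_gen (hmon n hn1)) hw.
      move=> v [σ [h [hh ->]]]; apply: hsym => //; apply: (hinc r) => //; lia.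
    by move=> u /(hst r n (ltac:(lia))).
  case: hG => σ [v [hv e]]; exists σ, v; split => //.
  have := @irr_act_gen _ _ (M n) (M r) _ σ^-1 w hw.
  rewrite e act_Kv; apply => //.
  by move=> a b ha hb _; rewrite invgK; split; apply: hsym => //; apply: (hinc r) => //; lia.
exists r, (irr (M r)); split => //; split.
  apply: (fin_sub hGf) => u hu; apply: (irr_in_gen (hmon r hr1)) hu => //.
  by move=> v /hGg.
by split; [apply: claim | ].
Qed.

Lemma flatten_size (l : seq (idx c d)) : size (flatten [seq tval x.1 | x <- l]) = (d * size l)%N.
Proof. elim: l => [|x l IH] /=; [by rewrite muln0 | by rewrite size_cat size_tuple IH mulnS]. Qed.

Lemma ii_to_iii : cond_ii -> cond_iii.
Proof.
case: (hM) => hmon hsupp hinc hsym [p [Hp [hp1 [hfin [hp hall]]]]].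
have hSL := SL hM hp1 (ii_stab hp1 hp hall).
exists p, (maxn 1 (size (@cover c d p))); split => //; split; first lia.
move=> n hn; split.
  move=> u; split.
    move=> hu; split; first by exists n; split => //; lia.
    by have [] := hsupp n u (ltac:(lia)) hu.
  move=> [[m [hm1 hu]] hun]; case: (leqP m n) => hmn.
    by apply: (hinc m n) => //; lia.
  by apply: (hSL n m) => //; lia.
exists (orbitn n Hp); split; first exact: fin_orb.
split; first by case: (hall n hn).
move=> u [σ [h [hh ->]]]; apply: ss_act; apply: (ss_mono (leq_maxr _ _)).
apply: ss_cover; case: hp => hHp _; by have [] := hsupp p h hp1 (hHp h hh).
Qed.

Lemma iii_to_iv : cond_iii -> cond_iv.
Proof.
case: (hM) => hmon hsupp hinc hsym [q [q' [hq1 [hq'1 hall]]]].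
pose N := maxn q (d * q').
have hN1 : (1 <= N)%N by rewrite /N; lia.
have [hNa [HN [hHNf [hHNb _]]]] := hall N (leq_maxl _ _).
pose H u := irr U u /\ supp_in N u.
exists H; split.
  apply: (fin_sub hHNf) => u [hu hs].
  have hMN : M N u by apply/hNa; split => //; case: hu.
  apply/(hb_irr (good_M hM hN1) hHNb); apply: (irr_sub _ hMN hu) => v hv; by exists N.
split; first by move=> u [[]].
apply: irr_hb; first exact: good_U.
move=> w; split.
  by move=> [K [hK [σ [h [[hh _] ->]]]]]; apply: irr_U_act.
move=> hw; have [[m [hm1 hwm]] _ _] := hw.
pose n := maxn m N.
have hn1 : (1 <= n)%N by rewrite /n; lia.
have hwn : M n w by apply: (hinc m) => //; rewrite /n; lia.
have [_ [Hn [_ [hHn hsz]]]] := hall n (ltac:(rewrite /n /N; lia)).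
have hirn : irr (M n) w by apply: irr_sub hw => // v hv; exists n.
have [l [hl hlm hlsz]] := hsz w ((hb_irr (good_M hM hn1) hHn w).2 hirn).
pose L := flatten [seq tval x.1 | x <- l].
have hLs : (size L <= N)%N.
  rewrite /L flatten_size /N; have := leq_mul (leqnn d) hlsz; lia.
pose S k := exists x, w x != 0 /\ k \in tval x.1.
have hSL : forall k, S k -> k \in L.
  move=> k [x [hx hk]]; apply/flatten_mapP; exists x => //; exact/hlm.
have hws : supp_in n w by have [] := hsupp n w hn1 hwn.
have [τ hτ] : exists τ : {perm 'I_n}, forall k, S k -> perm_nat τ k = (index k L).+1.
  apply: ext_perm.
  - by move=> k [x [hx hk]]; have := hws x hx; move/allP; apply.
  - move=> k /hSL hk; have hi : (index k L < size L)%N by rewrite index_mem.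
    rewrite /n; lia.
  - move=> k k' /hSL hk /hSL hk' e.
    by rewrite -(nth_index 0%N hk) -(nth_index 0%N hk'); congr nth; case: e.
exists n; split => //; exists (τ^-1)%g, (act τ w); split; last by rewrite act_Kv.
split; first exact: irr_U_act.
move=> x hx; apply/allP => k hk.
have hS : S (perm_nat τ^-1 k).
  exists (map_tuple (perm_nat τ^-1) x.1, x.2); split => //=; exact: map_f.
have := hτ _ hS; rewrite PN_K => ->.
have hi : (index (perm_nat τ^-1 k) L < size L)%N by rewrite index_mem hSL.
lia.
Qed.

Lemma iv_to_ii : cond_iv -> cond_ii.
Proof.
case: (hM) => hmon hsupp hinc hsym [H [[s hs] [hHU hb]]].
have horb := hb_irr (good_U hM) hb.
have [p [hp1 hpH]] : exists p, (1 <= p)%N /\ forall h, List.In h s -> M p h.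
  have : forall h, List.In h s -> U h by move=> h /hs /hHU.
  elim: s {hs} => [|h s IH] hU; first by exists 1%N.
  have [p [hp1 hp]] := IH (fun z hz => hU z (or_intror hz)).
  have [m [hm1 hm]] := hU h (or_introl erefl).
  exists (maxn m p); split; first lia.
  move=> z [<-|hz]; first by apply: (hinc m) => //; lia.
  by apply: (hinc p) => //; [lia | apply: hp].
have hHp : forall h, H h -> M p h by move=> h /hs /hpH.
have claim : forall n, (p <= n)%N -> eq_hilbert_basis_n n (M n) H.
  move=> n hn; have hn1 : (1 <= n)%N by lia.
  split; first by move=> h /hHp; apply: (hinc p) => //; lia.
  apply: irr_hb; first exact: good_M.
  have hGM : Defs.subset (orbitn n H) (M n).
    move=> v [σ [h [hh ->]]]; apply: hsym => //; apply: (hinc p) => //; [lia|exact: hHp].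
  move=> w; split.
    move=> hw; apply: irr_sub (hGM _ hw) ((horb w).1 _) => //.
      by move=> v hv; exists n.
    by exists n; split.
  apply: (irr_in_gen (hmon n hn1)) => // u hu.
  have [_ hgen _] := hb.
  have [t [ht htu]] := (hgen u).2 (ltac:(by exists n)).
  have hnn : forall z, List.In z t -> nonneg z.2.
    move=> z /ht /horb [hz _ _]; exact: ((good_U hM).2 _ hz).1.
  have hun : supp_in n u by have [] := hsupp n u hn1 hu.
  apply: (nncomb_filter htu) => z hz hz1.
  have [K [hK [σ [h [hh e]]]]] := ht z hz.
  have hsh : supp_in n h.
    apply: (supp_in_mono (m := p)); first lia.
    by have [] := hsupp p h hp1 (hHp h hh).
  have hsz : supp_in n (act σ h).
    move=> x hx; apply: hun; rewrite htu; rewrite -e in hx.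
    have := term_le x hnn hz hz1; have := hnn z hz x; move: hx.
    change (\sum_(p0 <- t) (p0.1)%:Z * p0.2 x) with (vsum t x); lia.
  have [τ hτ] := restrict hsh hsz.
  by exists τ, h; rewrite e -hτ.
exists p, H; split => //; split; first by exists s.
by split; [apply: claim | ].
Qed.

End Main.

Theorem theorem3p14 (c d : nat) (M : nat -> vset c d) :
  (0 < c)%N -> (0 < d)%N -> sym_chain M ->
  let cond_i :=
    stabilizes M /\
    exists N, forall n, (N <= n)%N -> fin_generated (M n) in
  let cond_ii :=
    exists p (Hp : vset c d), (1 <= p)%N /\ finite_set Hp /\
      eq_hilbert_basis_n p (M p) Hp /\
      forall n, (p <= n)%N -> eq_hilbert_basis_n n (M n) Hp in
  let cond_iii :=
    exists q q', (1 <= q)%N /\ (1 <= q')%N /\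
      forall n, (q <= n)%N ->
        (forall u, M n u <-> (chain_union M u /\ supp_in n u)) /\
        exists H, finite_set H /\ hilbert_basis (M n) H /\
                  forall u, H u -> supp_size_le u q' in
  let cond_iv :=
    exists H, finite_set H /\ eq_hilbert_basis (chain_union M) H in
  (cond_i <-> cond_ii) /\ (cond_ii <-> cond_iii) /\ (cond_iii <-> cond_iv).
Proof.
move=> _ _ hM.
exact: (conj (conj (i_to_ii hM) (ii_to_i hM))
  (conj (conj (ii_to_iii hM) (fun h => iv_to_ii hM (iii_to_iv hM h)))
        (conj (iii_to_iv hM) (fun h => ii_to_iii hM (iv_to_ii hM h))))).
Qed.
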